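(* Let $\mathcal S$ be a finite set, let $\kappa$ be a real symmetric $\mathcal S\times\mathcal S$ matrix with nonnegative entries, and let $\mu,c\in(0,\infty)^{\mathcal S}$ with $c_i<\mu_i$ for all $i$. Assume $D_c^{-1}-\kappa$ is positive definite, and set $\Phi=(D_c^{-1}-\kappa)^{-1}$, \[ A_0=(I-\kappa D_c)\,D_{\mu-c}^{-1}\,(I-D_\mu\kappa),\qquad A=\tfrac12(A_0+A_0^T). \] Let $k\in\mathbb N^{\mathcal S}$ and $h>0$ be such that $\Phi-h\,kk^T$ is positive definite, and let $B_k=(\Phi-h\,kk^T)^{-1}$. If \[ h\,k^T(D_\mu^{-1}-\kappa)k<1, \] then $A+B_k$ is positive definite.
   Context: For a vector $x\in\mathbb R^{\mathcal S}$, $D_x$ denotes the diagonal matrix with diagonal entries $x_i$; $\mu-c$ is the componentwise difference; $I$ is the identity matrix. (In the paper $h=h(k)$ is the limiting density of components of type vector $k$, but only $h>0$ and the stated conditions are used.) *)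

(* Defs.v *)
From mathcomp Require Import all_boot all_order all_algebra.
Set Implicit Arguments. Unset Strict Implicit. Unset Printing Implicit Defensive.
Import Order.TTheory GRing.Theory Num.Theory.
Local Open Scope ring_scope.

Definition posdef (R : realFieldType) (n : nat) (M : 'M[R]_n) : Prop :=
  M^T = M /\ forall x : 'cV[R]_n, x != 0 -> 0 < (x^T *m M *m x) 0 0.

Definition Dg (R : realFieldType) (n : nat) (x : 'I_n -> R) : 'M[R]_n :=
  diag_mx (\row_i x i).

(* Main.v *)
Require Import Defs.
From mathcomp Require Import all_boot all_order all_algebra.
From mathcomp Require Import ring lra.
Import Order.TTheory GRing.Theory Num.Theory.
Local Open Scope ring_scope.

Section Helpers.
Variable R : realFieldType.
Variable n : nat.
Implicit Types x y d : 'I_n -> R.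

Lemma Dg_ext x y : (forall i, x i = y i) -> Dg x = Dg y.
Proof. by move=> H; rewrite /Dg; congr diag_mx; apply/rowP=> i; rewrite !mxE H. Qed.

Lemma Dg1 : Dg (fun _ => 1) = 1%:M :> 'M[R]_n.
Proof.
rewrite /Dg -diag_const_mx; congr diag_mx; apply/rowP=> i; rewrite !mxE //.
Qed.

Lemma DgM x y : Dg x *m Dg y = Dg (fun i => x i * y i).
Proof. by rewrite /Dg mulmx_diag; congr diag_mx; apply/rowP=> i; rewrite !mxE. Qed.

Lemma DgB x y : Dg x - Dg y = Dg (fun i => x i - y i).
Proof. by apply/matrixP=> i j; rewrite !mxE mulrnBl. Qed.

Lemma DgT x : (Dg x)^T = Dg x.
Proof. by rewrite /Dg tr_diag_mx. Qed.

Lemma qform_diag d (y : 'cV[R]_n) :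
  (y^T *m Dg d *m y) 0 0 = \sum_i d i * y i 0 ^+ 2.
Proof.
rewrite /Dg mul_mx_diag !mxE; apply: eq_bigr => i _; rewrite !mxE; ring.
Qed.

Lemma qform_diag_pos d (y : 'cV[R]_n) : (forall i, 0 < d i) -> y != 0 ->
  0 < (y^T *m Dg d *m y) 0 0.
Proof.
move=> dpos y0; rewrite qform_diag.
case: (pickP (fun i => y i 0 != 0)) => [i yi|H]; last first.
  move/eqP: y0; case; apply/matrixP=> a b; rewrite ord1 mxE.
  by move/negbFE/eqP: (H a).
rewrite (bigD1 i) //=.
have ha : 0 < d i * y i 0 ^+ 2 by rewrite mulr_gt0 // exprn_even_gt0.
have hb : 0 <= \sum_(j | j != i) d j * y j 0 ^+ 2.
  by apply: sumr_ge0 => j _; apply: mulr_ge0; [exact: ltW|exact: sqr_ge0].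
lra.
Qed.

Lemma posdef_unit (M : 'M[R]_n) : posdef M -> M \in unitmx.
Proof.
case=> MT Mpos; rewrite unitmxE unitfE; apply/negP => /det0P [v v0 vM].
by move: (Mpos v^T); rewrite trmx_eq0 v0 trmxK vM mul0mx mxE ltxx => /(_ isT).
Qed.

End Helpers.
Theorem mainTheorem3 (R : realFieldType) (n : nat)
  (kappa : 'M[R]_n) (mu c : 'I_n -> R) (k : 'I_n -> nat) (h : R) :
  kappa^T = kappa ->
  (forall i j, 0 <= kappa i j) ->
  (forall i, 0 < mu i) -> (forall i, 0 < c i) -> (forall i, c i < mu i) ->
  posdef (Dg (fun i => (c i)^-1) - kappa) ->
  0 < h ->
  let Phi := invmx (Dg (fun i => (c i)^-1) - kappa) in
  let A0 := (1%:M - kappa *m Dg c) *m Dg (fun i => (mu i - c i)^-1)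
              *m (1%:M - Dg mu *m kappa) in
  let A := 2^-1 *: (A0 + A0^T) in
  let kv : 'cV[R]_n := \col_i (k i)%:R in
  posdef (Phi - h *: (kv *m kv^T)) ->
  let Bk := invmx (Phi - h *: (kv *m kv^T)) in
  h * (kv^T *m (Dg (fun i => (mu i)^-1) - kappa) *m kv) 0 0 < 1 ->
  posdef (A + Bk).
Proof.
move=> kT _ mu0 c0 cmu hM h0.
set M := Dg (fun i => (c i)^-1) - kappa in hM *.
move=> Phi A0 A kv hP Bk _.
have Mu := @posdef_unit _ _ _ hM.
case: hM => MT Mpos.
have PhiM : Phi *m M = 1%:M by rewrite mulVmx.
have MPhi : M *m Phi = 1%:M by rewrite mulmxV.
set e := fun i => c i * mu i / (mu i - c i).
have cne i : c i != 0 by rewrite gt_eqF.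
have mne i : mu i != 0 by rewrite gt_eqF.
have mcne i : mu i - c i != 0 by rewrite subr_eq0 gt_eqF.
have A0E : A0 = M *m Dg e *m M - M.
  have E1 : 1%:M - kappa *m Dg c = M *m Dg c.
    rewrite /M mulmxBl DgM (@Dg_ext _ _ (fun i => (c i)^-1 * c i) (fun _ => 1)) ?Dg1 // => i.
    by rewrite mulVf.
  have E2 : 1%:M - Dg mu *m kappa = Dg mu *m (M - Dg (fun i => (c i)^-1 - (mu i)^-1)).
    have -> : M - Dg (fun i => (c i)^-1 - (mu i)^-1) = Dg (fun i => (mu i)^-1) - kappa.
      rewrite /M addrAC DgB; congr (_ - _); apply: Dg_ext => i; ring.
    rewrite mulmxBr DgM (@Dg_ext _ _ (fun i => mu i * (mu i)^-1) (fun _ => 1)) ?Dg1 // => i.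
    by rewrite divff.
  rewrite /A0 E1 E2 !mulmxA -(mulmxA M (Dg c)) (DgM _ _ c) -(mulmxA M _ (Dg mu)) (DgM _ _ _ mu).
  rewrite (@Dg_ext _ _ _ e); last by move=> i; rewrite /e; field.
  rewrite mulmxBr -(mulmxA M (Dg e) (Dg _)) (DgM _ _ e).
  rewrite (@Dg_ext _ _ (fun i => e i * ((c i)^-1 - (mu i)^-1)) (fun _ => 1)) ?Dg1 ?mulmx1 // => i.
  by rewrite /e; field; rewrite cne mne mcne.
have ATr : A0^T = A0 by rewrite A0E linearB /= !trmx_mul DgT MT mulmxA.
have AE : A = M *m Dg e *m M - M.
  rewrite /A ATr -mulr2n -scaler_nat scalerA mulVf ?scale1r //.
  by rewrite pnatr_eq0.
have ATT : A^T = A by rewrite AE linearB /= !trmx_mul DgT MT mulmxA.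
have BkT : Bk^T = Bk by rewrite /Bk trmx_inv hP.1.
set w := M *m kv.
set s := (kv^T *m w) 0 0.
have wT : w^T = kv^T *m M by rewrite trmx_mul MT.
have kvTw : kv^T *m w = s%:M by apply: mx11_scalar.
have wTkv : w^T *m kv = s%:M by rewrite wT -kvTw /w mulmxA.
have Phiw : Phi *m w = kv by rewrite /w mulmxA PhiM mul1mx.
have s0 : 0 <= s.
  case: (eqVneq kv 0) => [k0|kn0]; first by rewrite /s /w k0 !mulmx0 mxE.
  by apply: ltW; rewrite /s /w mulmxA; apply: Mpos.
have hs : 0 < 1 - h * s.
  case: (eqVneq w 0) => [w0|wn0].
    by rewrite /s w0 mulmx0 mxE mulr0 subr0 ltr01.
  have := hP.2 w wn0.
  have -> : w^T *m (Phi - h *: (kv *m kv^T)) *m w = (s - h * (s * s))%:M.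
    rewrite mulmxBr mulmxBl -mulmxA Phiw -scalemxAr -scalemxAl.
    rewrite !mulmxA wTkv -!mulmxA kvTw -scalar_mxM.
    by apply/matrixP=> i j; rewrite !ord1 !mxE eqxx !mulr1n.
  rewrite mxE eqxx mulr1n => H.
  nra.
set t := h / (1 - h * s).
have t0 : 0 <= t by rewrite divr_ge0 // ltW.
have BkE : Bk = M + t *: (w *m w^T).
  set K := kv *m w^T.
  have T1 : Phi *m (t *: (w *m w^T)) = t *: K by rewrite -scalemxAr mulmxA Phiw.
  have T2 : (h *: (kv *m kv^T)) *m M = h *: K by rewrite -scalemxAl -mulmxA -wT.
  have T3 : (h *: (kv *m kv^T)) *m (t *: (w *m w^T)) = (h * t * s) *: K.
    rewrite -scalemxAl -scalemxAr scalerA -mulmxA (mulmxA kv^T) kvTw.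
    by rewrite mul_scalar_mx -scalemxAr scalerA.
  have PB : (Phi - h *: (kv *m kv^T)) *m (M + t *: (w *m w^T)) = 1%:M.
    rewrite mulmxDr !mulmxBl PhiM T1 T2 T3.
    have ht : t = h + h * t * s by rewrite /t; field; rewrite gt_eqF.
    by rewrite {1}ht scalerDl addrK subrK.
  have [Pu _] := mulmx1_unit PB.
  by rewrite /Bk -(mulKmx Pu (M + t *: (w *m w^T))) PB mulmx1.
split; first by rewrite linearD /= ATT BkT.
move=> x x0.
rewrite AE BkE addrA subrK mulmxDr mulmxDl mxE.
have e0 i : 0 < e i by rewrite /e divr_gt0 ?mulr_gt0 ?subr_gt0.
have y0 : M *m x != 0.
  apply: contra x0 => /eqP H; apply/eqP.
  by rewrite -(mulKmx Mu x) H mulmx0.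
have H1 := @qform_diag_pos _ _ _ _ e0 y0.
rewrite trmx_mul MT !mulmxA in H1.
have H2 : 0 <= (x^T *m (t *: (w *m w^T)) *m x) 0 0.
  rewrite -scalemxAr -scalemxAl mxE mulmxA -(mulmxA (x^T *m w)).
  have -> : x^T *m w = (w^T *m x)^T by rewrite trmx_mul trmxK.
  rewrite [w^T *m x]mx11_scalar tr_scalar_mx -scalar_mxM mxE eqxx mulr1n.
  by rewrite mulr_ge0 // -expr2 sqr_ge0.
by rewrite !mulmxA ltr_wpDr.
Qed.
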